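(* Let $(R,\mathfrak{m},k)$ be a complete Noetherian local ring and $E = E_R(k)$. Let $p$ be a pair operation on submodules of $E$. Then for any ideal $I$ of $R$, $p^{\mathrm{sd}}(I,R) = \operatorname{ann}_R (p(\operatorname{ann}_E(I),E))$. In particular, $p^{\mathrm{sd}}(R,R) = \operatorname{ann}_R p(0,E)$. If $p$ is defined at least on all pairs of Artinian modules (rather than just those of the form $(D,E)$) and is functorial, then $p^{\mathrm{sd}}(R,R)$ multiplies $p(A,B)$ into $A$ for every pair $(A,B)$ on which $p$ is defined, so long as $B/A$ is Artinian.
   Context: $(-)^\vee = \operatorname{Hom}_R(-,E)$ is Matlis duality. A pair operation $p$ on a class of pairs $(L,M)$, $L\subseteq M$, of Matlis-dualizable modules assigns a submodule $p(L,M)\subseteq M$ compatibly with isomorphisms of the ambient module. $p$ is functorial if $g(p(L,M)) \subseteq p(g(L),M')$ for every $R$-linear $g:M\to M'$. For $N\subseteq M$, $(M/N)^\vee$ is identified with $\{g\in M^\vee \mid g(N)=0\}$, and with $\eta_B: B\to B^{\vee\vee}$ the Matlis duality isomorphism, the smile dual of $p$ is $p^{\mathrm{sd}}(A,B) := \eta_B^{-1}\big((B^\vee / p((B/A)^\vee,B^\vee))^\vee\big)$; equivalently $x\in p^{\mathrm{sd}}(A,B)$ iff $g(x)=0$ for all $g \in p((B/A)^\vee,B^\vee)$. Here $R^\vee$ is identified with $E$ via $g\mapsto g(1)$. *)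

(* Defs.v *)
From HB Require Import structures.
From mathcomp Require Import all_boot all_order all_algebra.
From mathcomp Require Import boolp classical_sets.
Set Implicit Arguments. Unset Strict Implicit. Unset Printing Implicit Defensive.
Import GRing.Theory.
Local Open Scope ring_scope.
Local Open Scope classical_set_scope.

Section HomModule.
Variable R : comNzRingType.

Definition is_lin (M N : lmodType R) (f : M -> N) :=
  forall (a : R) (x y : M), f (a *: x + y) = a *: f x + f y.

Variables B E : lmodType R.

Record hom := Hom { homf :> B -> E; homP : is_lin homf }.

Lemma hom_ext (f g : hom) : (forall x, f x = g x) -> f = g.
Proof.
case: f => f fP; case: g => g gP /= fg.
have efg : f = g by apply: funext.
subst g; by rewrite (Prop_irrelevance fP gP).
Qed.

HB.instance Definition _ := gen_eqMixin hom.
HB.instance Definition _ := gen_choiceMixin hom.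

Lemma hom0_lin : is_lin (fun _ : B => (0 : E)).
Proof. by move=> a x y; rewrite scaler0 addr0. Qed.
Definition hom0 := Hom hom0_lin.

Lemma homN_lin (f : hom) : is_lin (fun x => - f x).
Proof. by move=> a x y; rewrite homP opprD scalerN. Qed.
Definition homN f := Hom (homN_lin f).

Lemma homD_lin (f g : hom) : is_lin (fun x => f x + g x).
Proof.
move=> a x y; rewrite !homP scalerDr -!addrA; congr (_ + _).
by rewrite addrCA.
Qed.
Definition homD f g := Hom (homD_lin f g).

Lemma homZ_lin (c : R) (f : hom) : is_lin (fun x => c *: f x).
Proof. by move=> a x y; rewrite homP scalerDr !scalerA mulrC. Qed.
Definition homZ c f := Hom (homZ_lin c f).

Lemma homD_A : associative homD.
Proof. by move=> f g h; apply: hom_ext => x /=; rewrite addrA. Qed.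
Lemma homD_C : commutative homD.
Proof. by move=> f g; apply: hom_ext => x /=; rewrite addrC. Qed.
Lemma homD_0 : left_id hom0 homD.
Proof. by move=> f; apply: hom_ext => x /=; rewrite add0r. Qed.
Lemma homD_N : left_inverse hom0 homN homD.
Proof. by move=> f; apply: hom_ext => x /=; rewrite addNr. Qed.

HB.instance Definition _ :=
  GRing.isZmodule.Build hom homD_A homD_C homD_0 homD_N.

Lemma homZ_A a b (f : hom) : homZ a (homZ b f) = homZ (a * b) f.
Proof. by apply: hom_ext => x /=; rewrite scalerA. Qed.
Lemma homZ_1 : left_id 1 homZ.
Proof. by move=> f; apply: hom_ext => x /=; rewrite scale1r. Qed.
Lemma homZ_Dr : right_distributive homZ +%R.
Proof. by move=> a f g; apply: hom_ext => x /=; rewrite scalerDr. Qed.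
Lemma homZ_Dl (f : hom) : {morph homZ^~ f : a b / a + b}.
Proof. by move=> a b; apply: hom_ext => x /=; rewrite scalerDl. Qed.

HB.instance Definition _ :=
  GRing.Zmodule_isLmodule.Build R hom homZ_A homZ_1 homZ_Dr homZ_Dl.

Lemma hom_addE (f g : hom) x : (f + g) x = f x + g x. Proof. by []. Qed.
Lemma hom_scaleE a (f : hom) x : (a *: f) x = a *: f x. Proof. by []. Qed.

End HomModule.

Notation dual E M := (hom M E).

Section Notions.
Variable R : comNzRingType.

Definition submodule (M : lmodType R) (L : set M) :=
  L 0 /\ forall (a : R) (x y : M), L x -> L y -> L (a *: x + y).

Definition ideal (I : set R) := @submodule R^o I.

Definition maximal_ideal (m : set R) :=
  [/\ ideal m, ~ m 1 &
      forall J : set R, ideal J -> m `<=` J -> ~ J 1 -> J = m].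

Definition local_ring_with (m : set R) :=
  maximal_ideal m /\ forall m' : set R, maximal_ideal m' -> m' = m.

Definition noetherian_ring :=
  forall I : nat -> set R, (forall n, ideal (I n)) ->
    (forall n, I n `<=` I n.+1) -> exists N, forall n, (N <= n)%N -> I n = I N.

Fixpoint ideal_pow (m : set R) (n : nat) : set R :=
  if n is n'.+1 then
    [set x | forall J : set R, ideal J ->
        (forall a b, ideal_pow m n' a -> m b -> J (a * b)) -> J x]
  else setT.

Definition complete_wrt (m : set R) :=
  (forall x : R, (forall n, ideal_pow m n x) -> x = 0) /\
  forall x : nat -> R, (forall n, ideal_pow m n (x n.+1 - x n)) ->
    exists y : R, forall n, ideal_pow m n (y - x n).

Definition injective_module (E : lmodType R) :=
  forall (M N : lmodType R) (f : M -> N) (g : M -> E),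
    is_lin f -> injective f -> is_lin g ->
    exists h : N -> E, is_lin h /\ forall x, h (f x) = g x.

(* E is an injective hull E_R(k) of the residue field k = R/m: E is injective
   and contains a copy R e0 of k (i.e. ann_R e0 = m) which is an essential
   submodule of E. *)
Definition injective_hull_residue (m : set R) (E : lmodType R) :=
  injective_module E /\
  exists e0 : E,
    (forall r : R, r *: e0 = 0 <-> m r) /\
    forall N : set E, submodule N -> (exists x, N x /\ x <> 0) ->
      exists x, [/\ N x, x <> 0 & exists r : R, x = r *: e0].

Definition artinian (M : lmodType R) :=
  forall L : nat -> set M, (forall n, submodule (L n)) ->
    (forall n, L n.+1 `<=` L n) -> exists N, forall n, (N <= n)%N -> L n = L N.

(* B/A is Artinian: DCC on the submodules of B containing A
   (these correspond to the submodules of B/A). *)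
Definition artinian_quotient (B : lmodType R) (A : set B) :=
  forall L : nat -> set B, (forall n, submodule (L n)) -> (forall n, A `<=` L n) ->
    (forall n, L n.+1 `<=` L n) -> exists N, forall n, (N <= n)%N -> L n = L N.

Variable E : lmodType R.

Lemma eval_lin (B : lmodType R) (x : B) : is_lin (fun g : dual E B => g x).
Proof. by []. Qed.
Definition matlis_eta (B : lmodType R) (x : B) : dual E (dual E B) :=
  Hom (eval_lin x).

Definition matlis_dualizable (B : lmodType R) := bijective (@matlis_eta B).

(* A pair operation: dom M L says p is defined on (L, M); p M L is p(L, M). *)
Definition pair_operation
    (dom : forall M : lmodType R, set M -> Prop)
    (p : forall M : lmodType R, set M -> set M) :=
  (forall (M : lmodType R) (L : set M), dom M L ->
     [/\ submodule L, matlis_dualizable M & submodule (p M L)]) /\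
  (forall (M M' : lmodType R) (phi : M -> M') (L : set M),
     is_lin phi -> bijective phi -> dom M L ->
     dom M' (phi @` L) /\ p M' (phi @` L) = phi @` p M L).

Definition functorial
    (dom : forall M : lmodType R, set M -> Prop)
    (p : forall M : lmodType R, set M -> set M) :=
  forall (M M' : lmodType R) (g : M -> M') (L : set M),
    is_lin g -> dom M L -> dom M' (g @` L) -> g @` p M L `<=` p M' (g @` L).

(* (M/N)^v identified with the maps in M^v vanishing on N. *)
Definition dual_quot (B : lmodType R) (A : set B) : set (dual E B) :=
  [set g | forall a, A a -> g a = 0].

Definition smile_dual (p : forall M : lmodType R, set M -> set M)
    (B : lmodType R) (A : set B) : set B :=
  [set x | forall g : dual E B, p (dual E B) (dual_quot A) g -> g x = 0].

Definition annE (I : set R) : set E := [set e | forall r, I r -> r *: e = 0].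
Definition annR (M : lmodType R) (S : set M) : set R :=
  [set r | forall x, S x -> r *: x = 0].

End Notions.
Arguments annE {R} E I _.

(* Main.v *)
Require Import Defs.
From HB Require Import structures.
From mathcomp Require Import all_boot all_order all_algebra.
From mathcomp Require Import boolp classical_sets.
Set Implicit Arguments. Unset Strict Implicit. Unset Printing Implicit Defensive.
Import GRing.Theory.
Local Open Scope ring_scope.
Local Open Scope classical_set_scope.

Section Aux.
Variable R : comNzRingType.

Lemma lin0 (M N : lmodType R) (f : M -> N) : is_lin f -> f 0 = 0.
Proof.
move=> fl; have := fl 1 0 0; rewrite !scale1r addr0.
by move=> /(congr1 (fun z => z - f 0)); rewrite addrK subrr.
Qed.

Lemma linZ (M N : lmodType R) (f : M -> N) a x : is_lin f -> f (a *: x) = a *: f x.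
Proof. by move=> fl; have := fl a x 0; rewrite addr0 (lin0 fl) addr0. Qed.

Lemma linR (N : lmodType R) (f : R^o -> N) (r : R) : is_lin f -> f r = r *: f 1.
Proof. by move=> fl; rewrite -(linZ r 1 fl); congr f; rewrite /GRing.scale /= mulr1. Qed.

Section Sub.
Variables (B : lmodType R) (P : set B) (HP : submodule P).
Definition subT_of of submodule P := {x : B | P x}.
Local Notation subT := (subT_of HP).
Lemma subT_ext (x y : subT) : proj1_sig x = proj1_sig y -> x = y.
Proof.
case: x => x xP; case: y => y yP /= exy; subst y.
by rewrite (Prop_irrelevance xP yP).
Qed.
HB.instance Definition _ := gen_eqMixin subT.
HB.instance Definition _ := gen_choiceMixin subT.
Definition sub0 : subT := exist _ 0 HP.1.
Lemma subD_P (x y : subT) : P (proj1_sig x + proj1_sig y).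
Proof. by have := HP.2 1 _ _ (proj2_sig x) (proj2_sig y); rewrite scale1r. Qed.
Definition subD x y : subT := exist _ _ (subD_P x y).
Lemma subZ_P a (x : subT) : P (a *: proj1_sig x).
Proof. by have := HP.2 a _ _ (proj2_sig x) HP.1; rewrite addr0. Qed.
Definition subZ a x : subT := exist _ _ (subZ_P a x).
Lemma subN_P (x : subT) : P (- proj1_sig x).
Proof. by have := subZ_P (-1) x; rewrite scaleN1r. Qed.
Definition subN x : subT := exist _ _ (subN_P x).
Lemma subD_A : associative subD.
Proof. by move=> f g h; apply: subT_ext => /=; rewrite addrA. Qed.
Lemma subD_C : commutative subD.
Proof. by move=> f g; apply: subT_ext => /=; rewrite addrC. Qed.
Lemma subD_0 : left_id sub0 subD.
Proof. by move=> f; apply: subT_ext => /=; rewrite add0r. Qed.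
Lemma subD_N : left_inverse sub0 subN subD.
Proof. by move=> f; apply: subT_ext => /=; rewrite addNr. Qed.
HB.instance Definition _ :=
  GRing.isZmodule.Build subT subD_A subD_C subD_0 subD_N.
Lemma subZ_A a b (f : subT) : subZ a (subZ b f) = subZ (a * b) f.
Proof. by apply: subT_ext => /=; rewrite scalerA. Qed.
Lemma subZ_1 : left_id 1 subZ.
Proof. by move=> f; apply: subT_ext => /=; rewrite scale1r. Qed.
Lemma subZ_Dr : right_distributive subZ +%R.
Proof. by move=> a f g; apply: subT_ext => /=; rewrite scalerDr. Qed.
Lemma subZ_Dl (f : subT) : {morph subZ^~ f : a b / a + b}.
Proof. by move=> a b; apply: subT_ext => /=; rewrite scalerDl. Qed.
HB.instance Definition _ :=
  GRing.Zmodule_isLmodule.Build R subT subZ_A subZ_1 subZ_Dr subZ_Dl.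
Lemma subval_lin : is_lin (fun x : subT => proj1_sig x).
Proof. by []. Qed.
End Sub.

Lemma exists_max (Hn : noetherian_ring R) (J : set R) :
  ideal J -> ~ J 1 -> exists M, maximal_ideal M /\ J `<=` M.
Proof.
move=> iJ J1; apply: contrapT => Hno.
have step : forall I : set R, ideal I -> ~ I 1 -> J `<=` I ->
    exists I', [/\ ideal I', ~ I' 1, I `<=` I' & I' <> I].
  move=> I iI I1 JI; apply: contrapT => H; apply: Hno; exists I; split=> //.
  split=> // K iK IK K1; apply: contrapT => KI; apply: H; by exists K.
pose T := {I : set R | [/\ ideal I, ~ I 1 & J `<=` I]}.
have st : forall t : T, {t' : T | proj1_sig t `<=` proj1_sig t' /\ proj1_sig t' <> proj1_sig t}.
  move=> [I [iI I1 JI]]; have /cid [I' [iI' I'1 II' ne]] := step I iI I1 JI.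
  by exists (exist _ I' (And3 iI' I'1 (fun x h => II' x (JI x h)))).
pose f := fun t => proj1_sig (st t).
pose t0 : T := exist _ J (And3 iJ J1 (fun x h => h)).
pose s := fun n => proj1_sig (iter n f t0).
have iS : forall n, ideal (s n) by move=> n; case: (proj2_sig (iter n f t0)).
have [N HN] := Hn s iS (fun n => (proj2_sig (st (iter n f t0))).1).
have := HN N.+1 (leqnSn N).
exact: (proj2_sig (st (iter N f t0))).2.
Qed.

Unset Implicit Arguments.
Section Main.
Variables (m : set R) (E : lmodType R)
    (Hlocal : local_ring_with m) (Hnoeth : noetherian_ring R)
    (HE : injective_hull_residue m E)
    (dom : forall M : lmodType R, set M -> Prop)
    (p : forall M : lmodType R, set M -> set M)
    (Hp : pair_operation E dom p)
    (HpE : forall D : set E, submodule D -> dom E D).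

Lemma part1 (I : set R) : ideal I ->
     @smile_dual R E p R^o I = annR (p E (annE E I)).
Proof.
move=> iI.
pose psi_f (e : E) : R^o -> E := fun r => r *: e.
have psil e : is_lin (psi_f e) by move=> a x y; rewrite /psi_f scalerDl scalerA.
pose psi e : dual E R^o := Defs.Hom (psil e).
have psilin : is_lin psi.
  move=> a x y; apply: hom_ext => r /=.
  by rewrite /psi_f scalerDr !scalerA mulrC.
have psibij : bijective psi.
  exists (fun g : dual E R^o => g 1).
    by move=> e; rewrite /= /psi_f scale1r.
  move=> g; apply: hom_ext => r /=; rewrite /psi_f.
  by symmetry; exact: (linR r (homP g)).
have subA : submodule (annE E I).
  split; first by move=> r _; rewrite scaler0.
  move=> a x y hx hy r Ir.
  by rewrite scalerDr scalerA mulrC -scalerA hx // hy // scaler0 addr0.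
have [_ peq] := Hp.2 E (dual E R^o) psi (annE E I) psilin psibij (HpE _ subA).
have dq : psi @` annE E I = @dual_quot R E R^o I.
  apply/seteqP; split.
  - by move=> g [e he <-] a Ia /=; exact: he.
  - move=> g hg; exists (g 1).
      by move=> r Ir; rewrite -(linR r (homP g)); exact: hg.
    apply: hom_ext => r /=; rewrite /psi_f.
    by symmetry; exact: (linR r (homP g)).
rewrite /smile_dual -dq peq; apply/seteqP; split => x /= H.
- move=> e he; apply: (H (psi e)); by exists e.
- by move=> g [e he <-]; exact: H e he.
Qed.

Lemma part2 : @smile_dual R E p R^o setT = annR (p E [set 0]).
Proof.
rewrite part1; last by split.
congr (annR (p E _)); apply/seteqP; split=> e /=.
- by move=> H; have := H 1 Logic.I; rewrite scale1r.
- by move=> -> r _; exact: scaler0.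
Qed.

Lemma sep (B : lmodType R) (A : set B) : submodule A -> forall y, ~ A y ->
  exists g : B -> E, [/\ is_lin g, (forall a, A a -> g a = 0) & g y <> 0].
Proof.
move=> sA y nAy.
pose J := [set s : R | A (s *: y)].
have iJ : ideal J.
  split; first by rewrite /J /= scale0r; exact: sA.1.
  move=> a s t Js Jt; rewrite /J /= scalerDl.
  have -> : (a *: (s : R^o)) *: y = a *: (s *: y) by rewrite scalerA.
  exact: sA.2.
have J1 : ~ J 1 by rewrite /J /= scale1r.
have [M [mM JM]] := exists_max Hnoeth iJ J1.
have eM := Hlocal.2 M mM; subst M.
have [Hinj [e0 [he0 _]]] := HE.
have [_ m1 _] := Hlocal.1.
have e0n : e0 <> 0 by move=> e00; apply: m1; apply/he0; rewrite e00 scaler0.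
pose P := [set x : B | exists s a, A a /\ x = a + s *: y].
have sP : submodule P.
  split; first by exists 0, 0; split; [exact: sA.1 | rewrite scale0r addr0].
  move=> a x1 x2 [s1 [a1 [A1 ->]]] [s2 [a2 [A2 ->]]].
  exists (a * s1 + s2), (a *: a1 + a2); split; first exact: sA.2.
  by rewrite scalerDr scalerDl scalerA addrACA.
pose g0 := fun x : subT_of sP => (projT1 (cid (proj2_sig x))) *: e0.
have key : forall x s a, A a -> proj1_sig x = a + s *: y -> g0 x = s *: e0.
  move=> x s a Aa ex; rewrite /g0; case: cid => s' [a' [Aa' ex']] /=.
  apply/eqP; rewrite -subr_eq0 -scalerBl; apply/eqP/he0/JM; rewrite /J.
  rewrite /= scalerBl -[s' *: y](addKr a') -ex' ex addrA addrK addrC.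
  by have := sA.2 (-1) a' a Aa' Aa; rewrite scaleN1r addrC.
have g0l : is_lin g0.
  move=> a x1 x2.
  have [s1 [a1 [A1 e1]]] := proj2_sig x1.
  have [s2 [a2 [A2 e2]]] := proj2_sig x2.
  rewrite (key x1 s1 a1 A1 e1) (key x2 s2 a2 A2 e2).
  rewrite (key (a *: x1 + x2) (a * s1 + s2) (a *: a1 + a2)); last first.
  - by rewrite /= e1 e2 scalerDr scalerDl scalerA addrACA.
  - exact: sA.2.
  by rewrite scalerDl scalerA.
have [h [hl hs]] := Hinj _ _ _ g0 (@subval_lin B P sP)
  (fun x1 x2 => @subT_ext B P sP x1 x2) g0l.
exists h; split=> //.
- move=> a Aa.
  have Pa : P a by exists 0, a; split=> //; rewrite scale0r addr0.
  have := hs (exist _ a Pa); rewrite /= => ->.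
  by rewrite (key (exist _ a Pa) 0 a Aa) ?scale0r ?addr0.
- have Py : P y by exists 1, 0; split; [exact: sA.1 | rewrite add0r scale1r].
  have := hs (exist _ y Py); rewrite /= => ->.
  by rewrite (key (exist _ y Py) 1 0 sA.1) ?scale1r ?add0r.
Qed.

End Main.
End Aux.

Theorem proposition3p6
    (R : comNzRingType) (m : set R) (E : lmodType R)
    (Hlocal : local_ring_with m) (Hnoeth : noetherian_ring R)
    (Hcompl : complete_wrt m) (HE : injective_hull_residue m E)
    (dom : forall M : lmodType R, set M -> Prop)
    (p : forall M : lmodType R, set M -> set M)
    (Hp : pair_operation E dom p)
    (HpE : forall D : set E, submodule D -> dom E D) :
  (forall I : set R, ideal I ->
     @smile_dual R E p R^o I = annR (p E (annE E I))) /\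
  @smile_dual R E p R^o setT = annR (p E [set 0]) /\
  ((forall (M : lmodType R) (L : set M), artinian M -> submodule L -> dom M L) ->
   functorial dom p ->
   forall (B : lmodType R) (A : set B), dom B A -> artinian_quotient A ->
     forall (r : R) (b : B), @smile_dual R E p R^o setT r -> p B A b -> A (r *: b)).
Proof.
split; first exact: (part1 _ _ _ _ Hp HpE).
split; first exact: (part2 _ _ _ _ Hp HpE).
move=> _ Hf B A dA _ r b Hr pb.
have [sA _ _] := Hp.1 B A dA.
apply: contrapT => nA.
have [g [gl gA gy]] := sep _ _ _ Hlocal Hnoeth HE _ _ sA _ nA.
have img : g @` A = [set 0].
  apply/seteqP; split => z.
  - by move=> [a Aa <-]; exact: gA.
  - by move=> /= ->; exists 0; [exact: sA.1 | exact: lin0 gl].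
have d0 : dom E [set 0].
  by apply: HpE; split=> //= a x y -> ->; rewrite scaler0 addr0.
have dg : dom E (g @` A) by rewrite img.
have := Hf _ _ g A gl dA dg (g b) (ex_intro2 _ _ b pb erefl).
rewrite img => gb.
rewrite (part2 _ _ _ _ Hp HpE) in Hr.
by apply: gy; rewrite (linZ r b gl); exact: Hr.
Qed.
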